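(* $\widehat{\mathsf{C}^{\mathrm{cof}}_{\boldsymbol{\Sigma}^1_1,\mathbb{N}}}\le_{\mathrm{sW}} \mathsf{wFindHS}_{\boldsymbol{\Pi}^0_1}$.
   Context: Strong Weihrauch reducibility: $f\le_{\mathrm{sW}} g$ iff there are computable $\Phi,\Psi$ on Baire space such that $\Psi\circ G\circ\Phi$ realizes $f$ for every realizer $G$ of $g$. $\mathsf{C}^{\mathrm{cof}}_{\boldsymbol{\Sigma}^1_1,\mathbb{N}}$ is the partial multivalued function which, given a nonempty cofinite $\boldsymbol{\Sigma}^1_1$ subset $A\subseteq\mathbb{N}$ (named by a name of a closed set $C\subseteq\mathbb{N}\times\mathbb{N}^\mathbb{N}$ whose projection to $\mathbb{N}$ is $A$), returns an element of $A$. For a multivalued $f$, its parallelization $\widehat{f}$ maps a sequence $(x_n)_{n\in\mathbb{N}}$ of inputs of $f$ to the set of sequences $(y_n)_n$ with $y_n\in f(x_n)$ for all $n$. The Ramsey space $[\mathbb{N}]^\mathbb{N}$ is the set of strictly increasing functions $\mathbb{N}\to\mathbb{N}$ with Baire-space topology; $fg=f\circ g$. For $P\subseteq[\mathbb{N}]^\mathbb{N}$, $f$ is homogeneous for $P$ if either $fg\in P$ for all $g\in[\mathbb{N}]^\mathbb{N}$ or $fg\notin P$ for all $g$; $\mathrm{HS}(P)$ is the set of homogeneous solutions. Open sets of $[\mathbb{N}]^\mathbb{N}$ are named by enumerations of sets of finite strictly increasing strings whose cones have union the set. $\mathsf{wFindHS}_{\boldsymbol{\Pi}^0_1}$: input an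 open $P$ with $\mathrm{HS}(P)\cap P=\emptyset$, output any element of $\mathrm{HS}(P)\setminus P$. *)

(* Defs.v *)
From mathcomp Require Import all_boot.
Set Implicit Arguments. Unset Strict Implicit. Unset Printing Implicit Defensive.

Inductive prog : Type :=
| PZero
| PSucc
| PProj (i : nat)
| PComp (f : prog) (gs : seq prog)
| PRec (f g : prog)
| PMu (f : prog).

Inductive eval : prog -> seq nat -> nat -> Prop :=
| eZero a : eval PZero a 0
| eSucc a : eval PSucc a (head 0 a).+1
| eProj i a : eval (PProj i) a (nth 0 a i)
| eComp f gs a bs y : evals gs a bs -> eval f bs y -> eval (PComp f gs) a y
| eRec0 f g a y : eval f a y -> eval (PRec f g) (0 :: a) y
| eRecS f g n a r y : eval (PRec f g) (n :: a) r -> eval g (n :: r :: a) y ->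
                      eval (PRec f g) (n.+1 :: a) y
| eMu f a y : eval f (y :: a) 0 ->
              (forall z, z < y -> exists v, eval f (z :: a) v.+1) ->
              eval (PMu f) a y
with evals : seq prog -> seq nat -> seq nat -> Prop :=
| esNil a : evals [::] a [::]
| esCons g gs a b bs : eval g a b -> evals gs a bs -> evals (g :: gs) a (b :: bs).

Definition computable (h : nat -> nat) : Prop :=
  exists e : prog, forall n, eval e [:: n] (h n).

Definition cpair (a b : nat) : nat := ((a + b) * (a + b).+1)./2 + b.
Fixpoint code (s : seq nat) : nat :=
  if s is x :: s' then (cpair x (code s')).+1 else 0.

Definition baire := nat -> nat.
Definition prefix (p : baire) (k : nat) : seq nat := mkseq p k.

(* A total recursive h
   determines the partial map p |-> q where q n + 1 is the first nonzero
   value of h <n, code(p|k)>, k = 0,1,2,...  (this is a standard, equivalent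
   presentation of Type-2 computable partial functions). *)
Definition runs (h : nat -> nat) (p q : baire) : Prop :=
  forall n, exists k, h (cpair n (code (prefix p k))) = (q n).+1 /\
    forall k', k' < k -> h (cpair n (code (prefix p k'))) = 0.

Record repspace := RepSpace {
  carrier :> Type;
  names : baire -> carrier -> Prop
}.

Record mvf (X Y : repspace) := MVF {
  mdom : X -> Prop;
  mval : X -> Y -> Prop
}.

Definition realizer (X Y : repspace) (f : mvf X Y) (G : baire -> baire) : Prop :=
  forall (p : baire) (x : X), names p x -> mdom f x ->
    exists y : Y, mval f x y /\ names (G p) y.

Definition sW_reducible (X Y X' Y' : repspace) (f : mvf X Y) (g : mvf X' Y')
  : Prop :=
  exists hPhi hPsi : nat -> nat, computable hPhi /\ computable hPsi /\
    forall G : baire -> baire, realizer g G ->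
      forall (p : baire) (x : X), names p x -> mdom f x ->
        exists q : baire, runs hPhi p q /\
          exists r : baire, runs hPsi (G q) r /\
            exists y : Y, mval f x y /\ names r y.

Definition seqspace (X : repspace) : repspace :=
  @RepSpace (nat -> X)
    (fun p xs => forall i, names (fun j => p (cpair i j)) (xs i)).

Definition parallel (X Y : repspace) (f : mvf X Y) : mvf (seqspace X) (seqspace Y) :=
  @MVF (seqspace X) (seqspace Y)
    (fun xs => forall i, mdom f (xs i))
    (fun xs ys => forall i, mval f (xs i) (ys i)).

Definition natspace : repspace := @RepSpace nat (fun q n => q 0 = n).

(* Sigma^1_1 subsets of N, named by a name of a closed set C of N x N^N
   (closed sets named by trees: (n,x) in C iff p(code(n::x|k)) = 0 for all k)
   whose projection to N is A. *)
Definition closed_set_of (p : baire) : nat * baire -> Prop :=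
  fun nx => forall k, p (code (nx.1 :: prefix nx.2 k)) = 0.

Definition sigma11space : repspace :=
  @RepSpace (nat -> Prop)
    (fun p A => forall n, A n <-> exists x : baire, closed_set_of p (n, x)).

Definition Ccof_Sigma11_N : mvf sigma11space natspace :=
  @MVF sigma11space natspace
    (fun A => (exists n, A n) /\ (exists m, forall n, m <= n -> A n))
    (fun A n => A n).

Definition incr (f : baire) : Prop := forall n, f n < f n.+1.

Definition ramseyspace : repspace :=
  @RepSpace baire (fun q f => incr f /\ forall n, q n = f n).

(* open subsets of [N]^N: p enumerates (p n = code s + 1, 0 = nothing)
   a set S of strictly increasing finite strings with P = union of cones *)
Definition enumerated (p : baire) (s : seq nat) : Prop :=
  exists n, p n = (code s).+1.

Definition openspace : repspace :=
  @RepSpace (baire -> Prop)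
    (fun p P => (forall s, enumerated p s -> sorted ltn s) /\
       forall f, P f <-> incr f /\
         exists s, enumerated p s /\ prefix f (size s) = s).

Definition HS (P : baire -> Prop) (f : baire) : Prop :=
  incr f /\ ((forall g, incr g -> P (f \o g)) \/
             (forall g, incr g -> ~ P (f \o g))).

Definition wFindHS_Pi01 : mvf openspace ramseyspace :=
  @MVF openspace ramseyspace
    (fun P => forall f, ~ (HS P f /\ P f))
    (fun P f => HS P f /\ ~ P f).

(* Main.v *)
Require Import Defs.
From mathcomp Require Import all_boot zify.
From Stdlib Require Import Classical ClassicalEpsilon.
Set Implicit Arguments. Unset Strict Implicit. Unset Printing Implicit Defensive.

Fixpoint tri (t : nat) : nat := if t is t'.+1 then tri t' + t else 0.

Lemma triS t : tri t.+1 = tri t + t.+1. Proof. by []. Qed.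

Lemma triE t : (t * t.+1)./2 = tri t.
Proof.
elim: t => [//|t IH].
have -> : t.+1 * t.+2 = t * t.+1 + (t.+1).*2 by rewrite -mul2n; lia.
rewrite halfD doubleK odd_double andbF add0n IH /=. lia.
Qed.

Lemma cpairE a b : cpair a b = tri (a + b) + b.
Proof. by rewrite /cpair triE. Qed.

Lemma tri_mono t t' : t <= t' -> tri t <= tri t'.
Proof.
move=> /subnK <-; elim: (t' - t) => [|d IH]; first by rewrite add0n.
rewrite addSn triS; lia.
Qed.

Fixpoint diag (c : nat) : nat :=
  if c is c'.+1 then (if tri (diag c').+1 <= c'.+1 then (diag c').+1 else diag c')
  else 0.

Lemma diag_spec c : tri (diag c) <= c < tri (diag c).+1.
Proof.
elim: c => [//|c IH] /=.
case: ifP => H; rewrite ?triS in H IH *; lia.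
Qed.

Lemma diag_uniq c t : tri t <= c < tri t.+1 -> diag c = t.
Proof.
move=> Ht; have Hd := diag_spec c.
case: (ltngtP (diag c) t) => // H.
- have := tri_mono H; lia.
- have := tri_mono H; lia.
Qed.

Definition usnd c := c - tri (diag c).
Definition ufst c := diag c - usnd c.

Lemma diag_cpair a b : diag (cpair a b) = a + b.
Proof. apply: diag_uniq; rewrite cpairE triS; lia. Qed.

Lemma usnd_cpair a b : usnd (cpair a b) = b.
Proof. rewrite /usnd diag_cpair cpairE; lia. Qed.

Lemma ufst_cpair a b : ufst (cpair a b) = a.
Proof. rewrite /ufst usnd_cpair diag_cpair; lia. Qed.

Lemma cpair_surj c : cpair (ufst c) (usnd c) = c.
Proof.
have := diag_spec c; rewrite cpairE /ufst /usnd triS => H.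
have -> : diag c - (c - tri (diag c)) + (c - tri (diag c)) = diag c by lia.
lia.
Qed.

Lemma cpair_mono a b a' b' : a <= a' -> b <= b' -> cpair a b <= cpair a' b'.
Proof.
rewrite !cpairE => Ha Hb; have : a + b <= a' + b' by lia.
move/tri_mono; lia.
Qed.

Lemma cpair_ge2 a b : b <= cpair a b.
Proof. rewrite cpairE; lia. Qed.

Lemma cpair_ge1 a b : a <= cpair a b.
Proof. rewrite cpairE. have : a + b <= tri (a + b).
  case: (a+b) => // n; rewrite triS; lia. lia. Qed.

Lemma ufst0 : ufst 0 = 0. Proof. by []. Qed.
Lemma usnd0 : usnd 0 = 0. Proof. by []. Qed.

Definition tl c := usnd c.-1.
Definition tlj j c := iter j tl c.
Definition nthc j c := ufst (tlj j c).-1.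
Definition lenc c := count (fun j => tlj j c != 0) (iota 0 c).

Lemma tl_cons x s : tl (code (x :: s)) = code s.
Proof. by rewrite /tl /= usnd_cpair. Qed.

Lemma tlj_code j s : tlj j (code s) = code (drop j s).
Proof.
elim: j s => [|j IH] s; first by rewrite drop0.
rewrite /tlj iterSr -/(tlj j _).
case: s => [|x s] /=; first by rewrite /tl /= -/(tlj j 0) (IH [::]).
by rewrite tl_cons IH.
Qed.

Lemma nthc_code j s : nthc j (code s) = nth 0 s j.
Proof.
rewrite /nthc tlj_code.
case: (ltnP j (size s)) => H.
- by rewrite (drop_nth 0 H) /= ufst_cpair.
- by rewrite drop_oversize //= nth_default.
Qed.

Lemma code_size s : size s <= code s.
Proof. elim: s => //= x s IH; have := cpair_ge2 x (code s); lia. Qed.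

Lemma code0 s : (code s == 0) = (s == [::]).
Proof. by case: s. Qed.

Lemma lenc_code s : lenc (code s) = size s.
Proof.
rewrite /lenc -(subnKC (code_size s)) iotaD count_cat add0n.
rewrite (eq_in_count (a2 := predT)) ?count_predT ?size_iota.
 rewrite (eq_in_count (a2 := pred0)) ?count_pred0 ?addn0 //.
 move=> j; rewrite mem_iota => /andP [H1 H2] /=.
 rewrite subnKC ?code_size // tlj_code code0 drop_oversize //.
move=> j; rewrite mem_iota => /andP [H1 H2] /=.
rewrite subnKC ?code_size // tlj_code code0 /=.
by apply/eqP => /(f_equal size); rewrite size_drop /=; lia.
Qed.

Lemma code_surj c : exists s, code s = c.
Proof.
elim/ltn_ind: c => [[|c]] IH; first by exists [::].
have Hlt : usnd c < c.+1.
  by have := cpair_ge2 (ufst c) (usnd c); rewrite cpair_surj; lia.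
have [s Hs] := IH (usnd c) Hlt.
by exists (ufst c :: s); rewrite /= Hs cpair_surj.
Qed.

Lemma code_mono s s' : size s = size s' -> (forall j, nth 0 s j <= nth 0 s' j) -> code s <= code s'.
Proof.
elim: s s' => [|x s IH] [|x' s'] //= [Hsz] H.
rewrite ltnS; apply: cpair_mono; first exact: (H 0).
by apply: IH => // j; exact: (H j.+1).
Qed.

Lemma code_take j s : code (take j s) <= code s.
Proof.
elim: s j => [|x s IH] [|j] //=.
rewrite ltnS; apply: cpair_mono => //.
Qed.


Inductive ex : Type :=
| EV (i : nat) | EZ | ES (e : ex) | ER (b s n : ex).

Definition scons (x : nat) (r : nat -> nat) : nat -> nat :=
  fun i => if i is i'.+1 then r i' else x.

Fixpoint nrec (b : nat) (st : nat -> nat -> nat) (n : nat) : nat :=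
  if n is n'.+1 then st n' (nrec b st n') else b.

Fixpoint den (e : ex) (r : nat -> nat) : nat :=
  match e with
  | EV i => r i
  | EZ => 0
  | ES e => (den e r).+1
  | ER b s n => nrec (den b r) (fun k x => den s (scons k (scons x r))) (den n r)
  end.

Lemma nrec_ext b b' st st' n : b = b' -> (forall k x, st k x = st' k x) ->
  nrec b st n = nrec b' st' n.
Proof. move=> -> H; elim: n => //= n ->; exact: H. Qed.

Lemma den_ext e r r' : (forall i, r i = r' i) -> den e r = den e r'.
Proof.
elim: e r r' => [i|| e IH| b IHb s IHs n IHn] r r' H //=.
- by rewrite (IH _ r').
- rewrite (IHn r r' H); apply: nrec_ext; first exact: IHb.
  move=> k x; apply: IHs; by case=> [|[|i]] //=.
Qed.

Fixpoint liftc (d c : nat) (e : ex) : ex :=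
  match e with
  | EV i => EV (if i < c then i else i + d)
  | EZ => EZ
  | ES e => ES (liftc d c e)
  | ER b s n => ER (liftc d c b) (liftc d c.+2 s) (liftc d c n)
  end.

Lemma den_liftc d e c r r' :
  (forall i, r' (if i < c then i else i + d) = r i) -> den (liftc d c e) r' = den e r.
Proof.
elim: e c r r' => [i|| e IH| b IHb s IHs n IHn] c r r' H //=.
- by rewrite (IH c r).
- rewrite (IHn c r) //; apply: nrec_ext; first exact: IHb.
  move=> k x; apply: IHs => -[|[|i]] //=.
  rewrite !ltnS; have := H i; case: ifP => Hi //= <-.
Qed.

Definition elift e := liftc 2 0 e.
Definition elift1 e := liftc 1 0 e.
Definition elift11 e := liftc 1 1 e.

Lemma den_elift e k x r : den (elift e) (scons k (scons x r)) = den e r.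
Proof. apply: den_liftc => i /=; by rewrite addn2. Qed.

Lemma den_elift1 e x r : den (elift1 e) (scons x r) = den e r.
Proof. apply: den_liftc => i /=; by rewrite addn1. Qed.

Lemma den_elift11 e k x r : den (elift11 e) (scons k (scons x r)) = den e (scons k r).
Proof. apply: den_liftc => -[|i] //=; by rewrite addn1. Qed.

Fixpoint comp (e : ex) (k : nat) : prog :=
  match e with
  | EV i => PProj i
  | EZ => PZero
  | ES e => PComp PSucc [:: comp e k]
  | ER b s n => PComp (PRec (comp b k) (comp s k.+2)) (comp n k :: mkseq PProj k)
  end.

Lemma evals_proj a l : evals (map PProj l) a (map (nth 0 a) l).
Proof. elim: l => [|i l IH] /=; constructor => //; exact: eProj. Qed.

Lemma evals_projs a : evals (mkseq PProj (size a)) a a.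
Proof. have E := mkseq_nth 0 a; rewrite /mkseq in E; rewrite /mkseq -[X in evals _ _ X]E; exact: evals_proj. Qed.

Lemma comp_ok e k a : size a = k -> eval (comp e k) a (den e (fun i => nth 0 a i)).
Proof.
elim: e k a => [i|| e IH| b IHb s IHs n IHn] k a Ha /=.
- exact: eProj.
- exact: eZero.
- apply: eComp; first by constructor; [exact: IH| constructor].
  exact: eSucc.
- apply: eComp; first by constructor; [exact: IHn| rewrite -Ha; exact: evals_projs].
  elim: (den n _) => [|m IHm] /=; first by apply: eRec0; exact: IHb.
  apply: eRecS; first exact: IHm.
  set x := nrec _ _ m.
  have -> : den s (scons m (scons x (fun i => nth 0 a i))) = den s (fun i => nth 0 [:: m, x & a] i).
    by apply: den_ext => -[|[|i]].
  by apply: IHs; rewrite /= Ha.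
Qed.

Definition env1 (n : nat) : nat -> nat := scons n (fun _ => 0).

Lemma comp_computable e : computable (fun n => den e (env1 n)).
Proof.
exists (comp e 1) => n.
rewrite (@den_ext _ _ (fun i => nth 0 [:: n] i)); first exact: comp_ok.
by case=> [|[|i]].
Qed.


Fixpoint ballf n (P : nat -> bool) := if n is n'.+1 then ballf n' P && P n' else true.
Fixpoint bexf n (P : nat -> bool) := if n is n'.+1 then bexf n' P || P n' else false.

Lemma ballP n P : ballf n P <-> forall x, x < n -> P x.
Proof.
elim: n => [|n IH] /=; first by split => // _ x.
split.
- move=> /andP [/IH H1 H2] x; rewrite ltnS leq_eqVlt => /orP [/eqP -> //|]; exact: H1.
- move=> H; apply/andP; split; last exact: H.
  apply/IH => x Hx; apply: H; lia.
Qed.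

Lemma bexP n P : bexf n P <-> exists x, x < n /\ P x.
Proof.
elim: n => [|n IH] /=; first by split => // -[x []].
split.
- move=> /orP [/IH [x [H1 H2]]|H]; [exists x; split => //; lia| by exists n].
- move=> [x [Hx HP]]; apply/orP; move: Hx; rewrite ltnS leq_eqVlt => /orP [/eqP Ex|Hx].
  + by right; rewrite -Ex.
  + by left; apply/IH; exists x.
Qed.

Definition tb e r := den e r != 0.

Definition one := ES EZ.
Definition epred e := locked (ER EZ (EV 0) e).
Definition eadd a b := locked (ER b (ES (EV 1)) a).
Definition esub a b := locked (ER a (epred (EV 1)) b).
Definition emul a b := locked (ER EZ (eadd (EV 1) (elift b)) a).
Definition eif c x y := locked (ER y (elift x) c).
Definition elt a b := locked (eif (esub b a) one EZ).
Definition ele a b := locked (elt a (ES b)).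
Definition eand a b := locked (eif a (eif b one EZ) EZ).
Definition eor a b := locked (eif a one (eif b one EZ)).
Definition enot a := locked (eif a EZ one).
Definition eimp a b := locked (eif a (eif b one EZ) one).
Definition eeq a b := locked (eand (ele a b) (ele b a)).
Definition eodd e := locked (ER EZ (esub one (EV 1)) e).
Definition ehalf e := locked (ER EZ (eadd (EV 1) (eodd (EV 0))) e).
Definition etri t := locked (ehalf (emul t (ES t))).
Definition ediag e := locked (ER EZ (eif (ele (etri (ES (EV 1))) (ES (EV 0))) (ES (EV 1)) (EV 1)) e).
Definition eusnd e := locked (esub e (etri (ediag e))).
Definition eufst e := locked (esub (ediag e) (eusnd e)).
Definition ecpair a b := locked (eadd (etri (eadd a b)) b).
Definition etl e := locked (eusnd (epred e)).
Definition etlj j c := locked (ER c (etl (EV 1)) j).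
Definition enthc j c := locked (eufst (epred (etlj j c))).
Definition elenc c := locked (ER EZ (eadd (EV 1) (enot (enot (etlj (EV 0) (elift c))))) c).
Definition eall N B := locked (ER one (eand (EV 1) (elift11 B)) N).
Definition eex N B := locked (ER EZ (eor (EV 1) (elift11 B)) N).



Lemma den_ER r b st n : den (ER b st n) r = nrec (den b r) (fun k x => den st (scons k (scons x r))) (den n r).
Proof. by []. Qed.

Lemma den_pred r e : den (epred e) r = (den e r).-1.
Proof. rewrite /epred -lock den_ER; by case: (den e r). Qed.

Lemma den_add r a b : den (eadd a b) r = den a r + den b r.
Proof. rewrite /eadd -lock den_ER; elim: (den a r) => //= n ->; by rewrite addSn. Qed.

Lemma den_sub r a b : den (esub a b) r = den a r - den b r.
Proof. rewrite /esub -lock den_ER; elim: (den b r) => [|n IH] /=; first by rewrite subn0. by rewrite den_pred /= IH subnS. Qed.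

Lemma den_mul r a b : den (emul a b) r = den a r * den b r.
Proof.
rewrite /emul -lock den_ER; elim: (den a r) => //= n IH.
by rewrite den_add /= den_elift IH mulSn addnC.
Qed.

Lemma den_if r c x y : den (eif c x y) r = if tb c r then den x r else den y r.
Proof. rewrite /tb /eif -lock den_ER; case: (den c r) => //= n; by rewrite den_elift. Qed.

Lemma tb_lt r a b : tb (elt a b) r = (den a r < den b r).
Proof. rewrite /elt -lock /tb den_if /tb den_sub; case: ltnP => H; [have -> : den b r - den a r != 0 by lia| have -> : den b r - den a r = 0 by lia] => //. Qed.

Lemma tb_le r a b : tb (ele a b) r = (den a r <= den b r).
Proof. by rewrite /ele -lock tb_lt. Qed.

Lemma tb_and r a b : tb (eand a b) r = tb a r && tb b r.
Proof. by rewrite /eand -lock /tb !den_if /tb; case: (den a r != 0); case: (den b r != 0). Qed.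

Lemma tb_or r a b : tb (eor a b) r = tb a r || tb b r.
Proof. by rewrite /eor -lock /tb !den_if /tb; case: (den a r != 0); case: (den b r != 0). Qed.

Lemma tb_not r a : tb (enot a) r = ~~ tb a r.
Proof. by rewrite /enot -lock /tb !den_if /tb; case: (den a r != 0). Qed.

Lemma den_not r a : den (enot a) r = ~~ tb a r.
Proof. by rewrite /enot -lock den_if; case: (tb a r). Qed.

Lemma tb_imp r a b : tb (eimp a b) r = tb a r ==> tb b r.
Proof. by rewrite /eimp -lock /tb !den_if /tb; case: (den a r != 0); case: (den b r != 0). Qed.

Lemma tb_eq r a b : tb (eeq a b) r = (den a r == den b r).
Proof. by rewrite /eeq -lock tb_and !tb_le eqn_leq. Qed.

Lemma den_odd r e : den (eodd e) r = odd (den e r).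
Proof.
rewrite /eodd -lock den_ER; elim: (den e r) => //= n IH.
by rewrite den_sub /= IH; case: (odd n).
Qed.

Lemma den_half r e : den (ehalf e) r = (den e r)./2.
Proof.
rewrite /ehalf -lock den_ER; elim: (den e r) => //= n IH.
rewrite den_add den_odd /= IH uphalf_half addnC //.
Qed.

Lemma den_tri r e : den (etri e) r = tri (den e r).
Proof. by rewrite /etri -lock den_half den_mul /= triE. Qed.

Lemma den_diag r e : den (ediag e) r = diag (den e r).
Proof.
rewrite /ediag -lock den_ER; elim: (den e r) => //= n IH.
rewrite den_if tb_le den_tri /= IH.
by case: ifP.
Qed.

Lemma den_usnd r e : den (eusnd e) r = usnd (den e r).
Proof. by rewrite /eusnd -lock den_sub den_tri den_diag. Qed.

Lemma den_ufst r e : den (eufst e) r = ufst (den e r).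
Proof. by rewrite /eufst -lock den_sub den_diag den_usnd. Qed.

Lemma den_cpair r a b : den (ecpair a b) r = cpair (den a r) (den b r).
Proof. by rewrite /ecpair -lock den_add den_tri den_add cpairE. Qed.

Lemma den_tl r e : den (etl e) r = tl (den e r).
Proof. by rewrite /etl -lock den_usnd den_pred. Qed.

Lemma den_tlj r j c : den (etlj j c) r = tlj (den j r) (den c r).
Proof.
rewrite /etlj -lock den_ER; elim: (den j r) => //= n IH.
by rewrite den_tl /= IH.
Qed.

Lemma den_nthc r j c : den (enthc j c) r = nthc (den j r) (den c r).
Proof. by rewrite /enthc -lock den_ufst den_pred den_tlj. Qed.

Lemma den_lenc r c : den (elenc c) r = lenc (den c r).
Proof.
rewrite /elenc -lock den_ER /lenc.
have : forall n, nrec 0 (fun k x => den (eadd (EV 1) (enot (enot (etlj (EV 0) (elift c)))))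
   (scons k (scons x r))) n = count (fun j => tlj j (den c r) != 0) (iota 0 n).
  elim=> [|n IH] //; rewrite [LHS]/= den_add /= IH den_not tb_not /tb den_tlj den_elift /=.
  rewrite -[RHS]/(count (fun j => tlj j (den c r) != 0) (iota 0 n.+1)) -addn1 iotaD count_cat /= addn0 add0n negbK; by case: (tlj n (den c r) != 0).
by move=> ->.
Qed.

Lemma tb_all r N B : tb (eall N B) r = ballf (den N r) (fun x => tb B (scons x r)).
Proof.
rewrite /eall -lock /tb den_ER; elim: (den N r) => //= n IH.
rewrite -/(tb _ _) tb_and /tb /= -/(tb _ _) IH -/(tb B _).
by rewrite /tb den_elift11.
Qed.

Lemma tb_ex r N B : tb (eex N B) r = bexf (den N r) (fun x => tb B (scons x r)).
Proof.
rewrite /eex -lock /tb den_ER; elim: (den N r) => //= n IH.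
rewrite -/(tb _ _) tb_or /tb /= -/(tb _ _) IH -/(tb B _).
by rewrite /tb den_elift11.
Qed.


Lemma eq_ballf n P Q : (forall x, P x = Q x) -> ballf n P = ballf n Q.
Proof. move=> H; elim: n => //= n ->; by rewrite H. Qed.
Lemma eq_bexf n P Q : (forall x, P x = Q x) -> bexf n P = bexf n Q.
Proof. move=> H; elim: n => //= n ->; by rewrite H. Qed.

Definition sortedb m := ballf (lenc m).-1 (fun j => nthc j m < nthc j.+1 m).
Definition bndb m i c := (lenc c == lenc m - i) && (nthc 0 c == nthc i m) &&
  ballf (lenc c) (fun j => nthc j c <= nthc (i + j) m).
Definition preb d c := (lenc d <= lenc c) && ballf (lenc d) (fun j => nthc j d == nthc j c).
Definition goodb m w := sortedb m && bexf (lenc m) (fun i =>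
  ballf (tlj i m).+1 (fun c => bndb m i c ==>
    bexf c.+1 (fun d => preb d c && (d != 0) && (nthc (cpair i d) w != 0)))).

Definition esorted M := locked eall (epred (elenc M)) (elt (enthc (EV 0) (elift1 M)) (enthc (ES (EV 0)) (elift1 M))).
Definition ebnd M I C := locked eand (eand (eeq (elenc C) (esub (elenc M) I)) (eeq (enthc EZ C) (enthc I M)))
  (eall (elenc C) (ele (enthc (EV 0) (elift1 C)) (enthc (eadd (elift1 I) (EV 0)) (elift1 M)))).
Definition epre D C := locked eand (ele (elenc D) (elenc C))
  (eall (elenc D) (eeq (enthc (EV 0) (elift1 D)) (enthc (EV 0) (elift1 C)))).
Definition egood M W :=
  let M1 := elift1 M in let W1 := elift1 W in
  let M2 := elift1 M1 in let W2 := elift1 W1 in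
  let M3 := elift1 M2 in let W3 := elift1 W2 in
  eand (esorted M) (eex (elenc M)
   (eall (ES (etlj (EV 0) M1))
     (eimp (ebnd M2 (EV 1) (EV 0))
       (eex (ES (EV 0))
         (eand (eand (epre (EV 0) (EV 1)) (enot (eeq (EV 0) EZ)))
               (enot (eeq (enthc (ecpair (EV 2) (EV 0)) W3) EZ))))))).

Lemma tb_sorted r M : tb (esorted M) r = sortedb (den M r).
Proof.
rewrite /esorted -lock tb_all den_pred den_lenc; apply: eq_ballf => x.
by rewrite tb_lt !den_nthc !den_elift1.
Qed.

Lemma tb_bnd r M I C : tb (ebnd M I C) r = bndb (den M r) (den I r) (den C r).
Proof.
rewrite /ebnd -lock !tb_and !tb_eq den_lenc den_sub !den_lenc !den_nthc tb_all den_lenc.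
congr (_ && _ && _); apply: eq_ballf => x.
by rewrite tb_le !den_nthc den_add !den_elift1.
Qed.

Lemma tb_pre r D C : tb (epre D C) r = preb (den D r) (den C r).
Proof.
rewrite /epre -lock !tb_and tb_le !den_lenc tb_all den_lenc.
congr (_ && _); apply: eq_ballf => x.
by rewrite tb_eq !den_nthc !den_elift1.
Qed.

Lemma den_ES r e : den (ES e) r = (den e r).+1. Proof. by []. Qed.
Lemma den_EV r i : den (EV i) r = r i. Proof. by []. Qed.
Lemma den_EZ r : den EZ r = 0. Proof. by []. Qed.
Lemma scons0 x r : scons x r 0 = x. Proof. by []. Qed.
Lemma sconsS x r i : scons x r i.+1 = r i. Proof. by []. Qed.

Lemma tb_good r M W : tb (egood M W) r = goodb (den M r) (den W r).
Proof.
rewrite /egood tb_and tb_sorted tb_ex den_lenc; congr (_ && _).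
apply: eq_bexf => i; rewrite tb_all den_ES den_tlj den_EV scons0 den_elift1.
apply: eq_ballf => c; rewrite tb_imp tb_bnd !den_elift1 !den_EV scons0 sconsS scons0 tb_ex den_ES den_EV scons0.
congr (_ ==> _); apply: eq_bexf => d.
rewrite !tb_and tb_pre !tb_not !tb_eq den_nthc den_cpair !den_elift1 !den_EV !scons0 !sconsS !scons0 den_EZ //.
Qed.

Definition EPsi := eif (elt (eufst (eufst (EV 0))) (elenc (eusnd (EV 0))))
  (ES (enthc (eufst (eufst (EV 0))) (eusnd (EV 0)))) EZ.

Definition hPsi c := if ufst (ufst c) < lenc (usnd c) then (nthc (ufst (ufst c)) (usnd c)).+1 else 0.

Lemma computable_ext f g : (forall n, f n = g n) -> computable f -> computable g.
Proof. move=> H [e He]; exists e => n; rewrite -H; exact: He. Qed.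

Lemma hPsi_comp : computable hPsi.
Proof.
apply: computable_ext (comp_computable EPsi) => c.
rewrite /EPsi /hPsi den_if tb_lt den_lenc !den_ufst !den_usnd den_EV /env1 scons0.
case: ifP => // _; by rewrite den_ES den_nthc den_ufst den_ufst den_usnd den_EV.
Qed.

Definition EPhi := eif (elt (elenc (eusnd (EV 0))) (eusnd (eufst (EV 0)))) EZ
  (ES (eif (egood (eufst (eufst (EV 0))) (eusnd (EV 0))) (ES (eufst (eufst (EV 0)))) EZ)).

Definition hPhi c := if lenc (usnd c) < usnd (ufst c) then 0 else
  (if goodb (ufst (ufst c)) (usnd c) then (ufst (ufst c)).+1 else 0).+1.

Lemma hPhi_comp : computable hPhi.
Proof.
apply: computable_ext (comp_computable EPhi) => c.
rewrite /EPhi /hPhi den_if tb_lt !(den_lenc, den_ufst, den_usnd, den_EV) /env1 scons0.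
case: ifP => // _; rewrite den_ES den_if tb_good !(den_ufst, den_usnd, den_EV) scons0.
by case: ifP => // _; rewrite den_ES !(den_ufst, den_EV).
Qed.


Definition dead (pt : nat -> nat) (i v : nat) (b : seq nat) :=
  forall sg : seq nat, size sg = size b -> (forall j, j < size sg -> nth 0 sg j <= nth 0 b j) ->
  exists j, j <= size sg /\ pt (cpair i (code (v :: take j sg))) != 0.

Lemma sortedb_code s : sortedb (code s) = sorted ltn s.
Proof.
apply/idP/idP.
- move/ballP; rewrite lenc_code => H; apply/(sortedP 0) => j Hj.
  by have := H j; rewrite !nthc_code; apply; lia.
- move/(sortedP 0) => H; apply/ballP; rewrite lenc_code => j Hj.
  by rewrite !nthc_code; apply: H; lia.
Qed.

Lemma take_eq (tau l : seq nat) : size tau <= size l ->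
  (forall j, j < size tau -> nth 0 tau j = nth 0 l j) -> tau = take (size tau) l.
Proof.
move=> Hs H; apply: (eq_from_nth (x0 := 0)); first by rewrite size_takel.
move=> j Hj; rewrite nth_take //; exact: H.
Qed.

Lemma bndb_code s i l : bndb (code s) i (code l) <->
  [/\ size l = size s - i, nth 0 l 0 = nth 0 s i &
      forall j, j < size l -> nth 0 l j <= nth 0 s (i + j)].
Proof.
rewrite /bndb !lenc_code !nthc_code; split.
- move=> /andP [/andP [/eqP H1 /eqP H2] /ballP H3]; split => // j Hj.
  by have := H3 j Hj; rewrite !nthc_code.
- move=> [H1 H2 H3]; rewrite H1 H2 !eqxx /=; apply/ballP => j Hj.
  rewrite !nthc_code; apply: H3; by rewrite H1.
Qed.

Lemma preb_code t l : preb (code t) (code l) <->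
  size t <= size l /\ forall j, j < size t -> nth 0 t j = nth 0 l j.
Proof.
rewrite /preb !lenc_code; split.
- move=> /andP [H1 /ballP H2]; split => // j Hj.
  by have := H2 j Hj; rewrite !nthc_code => /eqP.
- move=> [H1 H2]; rewrite H1 /=; apply/ballP => j Hj.
  by rewrite !nthc_code H2.
Qed.

Lemma good_code s w :
  goodb (code s) w <-> sorted ltn s /\ exists i, i < size s /\
    dead (fun x => nthc x w) i (nth 0 s i) (drop i.+1 s).
Proof.
rewrite /goodb sortedb_code; split.
- move/andP => [Hs /bexP [i [Hi H]]]; split => //; exists i.
  rewrite lenc_code in Hi; split => //.
  move/ballP: H => H sg Hsz Hb.
  set c := code (nth 0 s i :: sg).
  have Hc : c < (tlj i (code s)).+1.
    rewrite ltnS tlj_code (drop_nth 0 Hi); apply: code_mono => /=; first by rewrite Hsz.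
    case=> [|j] //=; case: (ltnP j (size sg)) => Hj; first exact: Hb.
    by rewrite nth_default.
  have Hbnd : bndb (code s) i c.
    apply/bndb_code; split => //=; first by rewrite Hsz size_drop; lia.
    case=> [|j] /=; first by rewrite addn0.
    by move=> Hj; have := Hb j; rewrite nth_drop addnS -addSn; apply.
  have := implyP (H c Hc) Hbnd.
  move=> /bexP [d [Hd /andP [/andP [Hpre Hd0] Hw]]].
  have [tau Et] := code_surj d; subst d.
  move/preb_code: Hpre => [Hsz' Heq].
  have Etau : tau = take (size tau) (nth 0 s i :: sg) by apply: take_eq.
  case: tau Etau Hd0 Hsz' Hw {Heq Hd} => [//|x tau] Etau _ Hsz' Hw.
  exists (size tau); split; first by move: Hsz'; rewrite /=; lia.
  by rewrite /= in Etau; rewrite -Etau.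
- move=> [Hs [i [Hi Hd]]]; apply/andP; split => //.
  apply/bexP; exists i; rewrite lenc_code; split => //.
  apply/ballP => c Hc; apply/implyP.
  have [sg' Es] := code_surj c; subst c.
  move/bndb_code => [Hsz H0 Hb].
  case: sg' Hsz H0 Hb Hc => [|v sg] Hsz H0 Hb Hc; first by move: Hsz => /=; lia.
  rewrite /= in H0; subst v.
  have Hs1 : size sg = size (drop i.+1 s) by rewrite size_drop; move: Hsz => /=; lia.
  have Hs2 : forall j, j < size sg -> nth 0 sg j <= nth 0 (drop i.+1 s) j.
    move=> j Hj; have := Hb j.+1; rewrite /= nth_drop addnS -addSn; apply; lia.
  have [j [Hj Hp]] := Hd sg Hs1 Hs2.
  apply/bexP; exists (code (nth 0 s i :: take j sg)); split.
    rewrite ltnS; exact: (code_take j.+1 (nth 0 s i :: sg)).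
  rewrite Hp andbT; apply/andP; split; last by [].
  apply/preb_code; split.
    by rewrite /= size_takel.
  case=> [|k] //= Hk; rewrite nth_take //; rewrite size_takel // in Hk.
Qed.


Lemma fmax (N : nat) (R : nat -> nat -> Prop) :
  (forall x t t', t <= t' -> R x t -> R x t') ->
  (forall x, x <= N -> exists t, R x t) -> exists t, forall x, x <= N -> R x t.
Proof.
move=> Hm; elim: N => [|N IH] H.
- have [t Ht] := H 0 (leqnn 0); exists t => x; rewrite leqn0 => /eqP ->; exact.
- have [t1 Ht1] := IH (fun x Hx => H x (leqW Hx)).
  have [t2 Ht2] := H N.+1 (leqnn _).
  exists (maxn t1 t2) => x; rewrite leq_eqVlt => /orP [/eqP ->|Hx].
  + apply: Hm Ht2; exact: leq_maxr.
  + apply: Hm (Ht1 x Hx); exact: leq_maxl.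
Qed.

Definition bnded (bs sg : seq nat) := size sg = size bs /\ forall j, j < size sg -> nth 0 sg j <= nth 0 bs j.

Lemma fin_t (bs : seq nat) (Q : seq nat -> nat -> Prop) :
  (forall sg t t', t <= t' -> Q sg t -> Q sg t') ->
  (forall sg, bnded bs sg -> exists t, Q sg t) ->
  exists t, forall sg, bnded bs sg -> Q sg t.
Proof.
elim: bs Q => [|b bs IH] Q Hm H.
- have Hb0 : bnded [::] [::] by split.
  have [t Ht] := H [::] Hb0.
  exists t => sg [Hs _]; case: sg Hs => // _; exact: Ht.
- have Hx : forall x, x <= b -> exists t, forall sg, bnded bs sg -> Q (x :: sg) t.
    move=> x Hxb; apply: IH; first by move=> sg t t'; apply: Hm.
    move=> sg [Hs Hb]; apply: H; split; first by rewrite /= Hs.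
    case=> [|j] /= Hj //; exact: Hb.
  have [t Ht] := @fmax b (fun x t => forall sg, bnded bs sg -> Q (x :: sg) t)
    (fun x t t' Htt H sg Hsg => Hm _ _ _ Htt (H sg Hsg)) Hx.
  exists t => -[|x sg] [Hs Hb] //.
  apply: Ht; first exact: (Hb 0).
  split; first by move: Hs => /= [].
  move=> j Hj; exact: (Hb j.+1).
Qed.


Definition goodpre (b : nat -> nat) (T : seq nat -> Prop) (sg : seq nat) := (forall j, j < size sg -> nth 0 sg j <= b j) /\
  (forall j, j <= size sg -> T (take j sg)).

Definition extat b T tau K := exists sg, size sg = K /\ goodpre b T sg /\ take (size tau) sg = tau.
Definition extd b T tau := forall K, size tau <= K -> extat b T tau K.

Lemma extat_down b T tau K K' : size tau <= K' -> K' <= K -> extat b T tau K -> extat b T tau K'.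
Proof.
move=> H1 H2 [sg [Hs [[Hb HT] Ht]]]; exists (take K' sg); split; first by rewrite size_takel // Hs.
split; last by rewrite take_takel.
split.
- move=> j; rewrite size_takel ?Hs // => Hj; rewrite nth_take //; apply: Hb; lia.
- move=> j; rewrite size_takel ?Hs // => Hj; rewrite take_takel //; apply: HT; lia.
Qed.

Lemma extd_step b T tau : extd b T tau -> exists x, extd b T (rcons tau x).
Proof.
move=> H; apply: NNPP => Hn.
have Hno : forall x, exists K, forall K', K <= K' -> ~ extat b T (rcons tau x) K'.
  move=> x; have : ~ extd b T (rcons tau x) by move=> Hx; apply: Hn; exists x.
  move=> /not_all_ex_not [K HK]; exists K => K' HK' Hext.
  apply: HK => Hs; apply: extat_down Hext => //.
have [Km HKm] := @fmax (b (size tau)) (fun x K => forall K', K <= K' -> ~ extat b T (rcons tau x) K')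
  (fun x t t' Htt H K' HK' => H K' (leq_trans Htt HK')) (fun x _ => Hno x).
have [sg [Hs [[Hb HT] Ht]]] := H (maxn Km (size tau).+1) (leq_trans (leqnSn _) (leq_maxr _ _)).
have Hlt : size tau < size sg by rewrite Hs; exact: leq_maxr.
apply: (HKm (nth 0 sg (size tau)) _ (maxn Km (size tau).+1) (leq_maxl _ _)).
- apply: Hb; lia.
- exists sg; split => //; split => //.
  by rewrite size_rcons (take_nth 0) // Ht.
Qed.

Lemma konig b T (Hall : forall K, exists sg, size sg = K /\ goodpre b T sg) : exists x : nat -> nat, forall k, T (Defs.prefix x k).
Proof.
have H0 : extd b T [::].
  move=> K _; have [sg [Hs Hg]] := Hall K; exists sg; split => //; split => //; exact: take0.
pose nxt tau := epsilon (inhabits 0) (fun x => extd b T (rcons tau x)).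
have Hnxt : forall tau, extd b T tau -> extd b T (rcons tau (nxt tau)).
  move=> tau Ht; apply: (epsilon_spec (inhabits 0) (fun x => extd b T (rcons tau x))).
  exact: extd_step.
pose pl := fix pl k := if k is k'.+1 then rcons (pl k') (nxt (pl k')) else [::].
have Hpl : forall k, extd b T (pl k) by elim=> [|k IH]; [exact: H0| exact: Hnxt].
have Hsz : forall k, size (pl k) = k by elim=> //= k IH; rewrite size_rcons IH.
exists (fun j => nth 0 (pl j.+1) j) => k.
have -> : Defs.prefix (fun j => nth 0 (pl j.+1) j) k = pl k.
  elim: k => // k IH; rewrite /Defs.prefix mkseqS -/(Defs.prefix _ k) IH /=.
  by rewrite nth_rcons Hsz ltnn eqxx.
have [sg [Hs [[_ HT] Ht]]] := Hpl k k (eq_leq (Hsz k)).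
rewrite -Ht Hsz; apply: HT; lia.
Qed.


Lemma nthc_pref p t x : nthc x (code (Defs.prefix p t)) = if x < t then p x else 0.
Proof.
rewrite nthc_code /Defs.prefix; case: ifP => H; first by rewrite nth_mkseq.
by rewrite nth_default // size_mkseq leqNgt H.
Qed.

Lemma lenc_pref p t : lenc (code (Defs.prefix p t)) = t.
Proof. by rewrite lenc_code size_mkseq. Qed.

Lemma incr_mono f m n : incr f -> m < n -> f m < f n.
Proof.
move=> Hf; elim: n => // n IH; rewrite ltnS leq_eqVlt => /orP [/eqP ->|H]; first exact: Hf.
exact: ltn_trans (IH H) (Hf n).
Qed.

Lemma incr_ge f n : incr f -> n <= f n.
Proof. move=> Hf; elim: n => // n IH; exact: leq_ltn_trans IH (Hf n). Qed.

Lemma sorted_prefix f K : incr f -> sorted ltn (Defs.prefix f K).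
Proof.
move=> Hf; apply/(sortedP 0) => j; rewrite size_mkseq => Hj.
rewrite !nth_mkseq //; [exact: Hf| lia].
Qed.

Theorem mainTheorem6 :
  sW_reducible (parallel Ccof_Sigma11_N) wFindHS_Pi01.
Proof.
exists hPhi, hPsi; split; first exact: hPhi_comp.
split; first exact: hPsi_comp.
move=> G HG p xs Hp Hdom.
pose q n := if goodb (ufst n) (code (Defs.prefix p (usnd n))) then (ufst n).+1 else 0.
exists q; split.
  move=> n; exists (usnd n); split.
  - by rewrite /hPhi ufst_cpair usnd_cpair lenc_pref ltnn.
  - by move=> k Hk; rewrite /hPhi ufst_cpair usnd_cpair lenc_pref Hk.
have Henum : forall s, enumerated q s <-> exists t, goodb (code s) (code (Defs.prefix p t)).
  move=> s; split.
  - move=> [n]; rewrite /q; case: ifP => // Hg [Hn]; exists (usnd n); by rewrite -Hn.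
  - move=> [t Ht]; exists (cpair (code s) t); by rewrite /q ufst_cpair usnd_cpair Ht.
pose P := fun f => incr f /\ exists s, enumerated q s /\ Defs.prefix f (size s) = s.
have Hnames : @names openspace q P.
  split => //; move=> s /Henum [t /good_code [Hs _]] //.
pose pth i := fun j => p (cpair i j).
have Hdom' : mdom wFindHS_Pi01 P.
  move=> f [[Hinc Hbr] HPf]; case: Hbr => Hbr; last first.
    by apply: (Hbr id) => //.
  pose M i := epsilon (inhabits 0) (fun m => forall n, m <= n -> xs i n).
  have HM : forall i n, M i <= n -> xs i n.
    move=> i; apply: (epsilon_spec (inhabits 0) (fun m => forall n, m <= n -> xs i n)).
    exact: (Hdom i).2.
  pose Path i n := epsilon (inhabits (fun _ : nat => 0)) (fun x => closed_set_of (pth i) (n, x)).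
  have HPath : forall i n, xs i n -> closed_set_of (pth i) (n, Path i n).
    move=> i n Hn; apply: (epsilon_spec (inhabits (fun _ : nat => 0)) (fun x => closed_set_of (pth i) (n, x))).
    by apply/(Hp i n).
  pose st := fix st k := if k is k'.+1 then
      let gk := (st k').1 in let D := (st k').2 in
      let g' := gk + 1 + M k'.+1 + D k'.+1 in
      (g', fun l => maxn (D l) (Path k'.+1 (f g') (l - k'.+2)))
    else (M 0, fun l => Path 0 (f (M 0)) (l - 1)).
  pose g k := (st k).1.
  pose D k := (st k).2.
  have HgS : forall k, g k.+1 = g k + 1 + M k.+1 + D k k.+1 by [].
  have Hginc : incr g by move=> k; rewrite HgS; lia.
  have HgM : forall k, M k <= g k by case=> [|k] //; rewrite HgS; lia.
  have HD : forall k i l, i <= k -> Path i (f (g i)) (l - i.+1) <= D k l.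
    elim=> [|k IH] i l Hi.
    - by move: Hi; rewrite leqn0 => /eqP ->.
    - rewrite /D /=; move: Hi; rewrite leq_eqVlt => /orP [/eqP ->|Hi].
      + exact: leq_maxr.
      + apply: leq_trans (IH i l _) (leq_maxl _ _); lia.
  pose X k := f (g k).
  have HX : forall k, xs k (X k).
    move=> k; apply: HM; apply: leq_trans (HgM k) (incr_ge _ Hinc).
  have Hdomi : forall i j, Path i (X i) j <= X (i.+1 + j).
    move=> i j; have H := HD (i + j) i (i + j).+1 (leq_addr _ _).
    rewrite subSS addKn in H; apply: leq_trans H _.
    apply: leq_trans (incr_ge _ Hinc); rewrite addSn HgS; lia.
  have [_ [s [/Henum [t /good_code [_ [i [Hi Hd]]]] Hpre]]] := Hbr g Hginc.
  pose x := Path i (X i).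
  pose sg := Defs.prefix x (size s - i.+1).
  have Hnth : forall j, j < size s -> nth 0 s j = X j.
    by move=> j Hj; rewrite -Hpre /Defs.prefix nth_mkseq.
  have Hs1 : size sg = size (drop i.+1 s) by rewrite /sg size_mkseq size_drop.
  have Hs2 : forall j, j < size sg -> nth 0 sg j <= nth 0 (drop i.+1 s) j.
    move=> j Hj; rewrite /sg size_mkseq in Hj; rewrite /sg nth_mkseq // nth_drop Hnth; [exact: Hdomi| lia].
  have [j [Hj Hne]] := Hd sg Hs1 Hs2.
  move: Hne; rewrite nthc_pref Hnth //.
  have -> : take j sg = Defs.prefix x j.
    move: Hj; rewrite /sg size_mkseq => Hj.
    by rewrite /Defs.prefix /mkseq -map_take take_iota (minn_idPl Hj).
  have := HPath i (X i) (HX i) j; rewrite /pth /= => ->.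
  by case: ifP.
have [y [[HHS HnP] [Hyinc Hy]]] := HG q P Hnames Hdom'.
exists (fun n => y (ufst n)); split.
  move=> n; exists (ufst n).+1; split.
  - rewrite /hPsi ufst_cpair usnd_cpair lenc_pref ltnSn nthc_pref ltnSn.
    by rewrite Hy.
  - by move=> k Hk; rewrite /hPsi ufst_cpair usnd_cpair lenc_pref ltnNge -ltnS Hk.
exists (fun i => y i); split; last by move=> i /=; rewrite ufst_cpair.
move=> i /=; apply: NNPP => Hni.
have Hnopath : forall x, ~ closed_set_of (pth i) (y i, x).
  by move=> x Hx; apply: Hni; apply/(Hp i); exists x.
pose T tau := p (cpair i (code (y i :: tau))) = 0.
pose b j := y (i.+1 + j).
have [K HK] : exists K, ~ exists sg, size sg = K /\ goodpre b T sg.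
  apply: NNPP => H; have [x Hx] := @konig b T (fun K => ltac:(apply: NNPP => H'; apply: H; by exists K)).
  by apply: (Hnopath x) => k; exact: Hx.
pose s := Defs.prefix y (i.+1 + K).
have Hsz : size s = i.+1 + K by rewrite size_mkseq.
pose Q := fun sg t => exists j, j <= size sg /\ nthc (cpair i (code (y i :: take j sg))) (code (Defs.prefix p t)) != 0.
have HQm : forall sg t t', t <= t' -> Q sg t -> Q sg t'.
  move=> sg t t' Htt [j [Hj Hne]]; exists j; split => //; move: Hne; rewrite !nthc_pref.
  case: ifP => // H1 H2; by rewrite (leq_trans H1 Htt).
have HQe : forall sg, bnded (drop i.+1 s) sg -> exists t, Q sg t.
  move=> sg [Hs1 Hs2].
  have : ~ (forall j, j <= size sg -> T (take j sg)).
    move=> HT; apply: HK; exists sg; split; first by rewrite Hs1 size_drop Hsz; lia.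
    split => // j Hj; move: (Hs2 j Hj); rewrite nth_drop /s nth_mkseq //.
    move: Hj; rewrite Hs1 size_drop Hsz; lia.
  move=> Hn; have [j Hj'] := not_all_ex_not _ _ Hn; have [Hj HnT] := imply_to_and _ _ Hj'.
  exists (cpair i (code (y i :: take j sg))).+1; exists j; split => //.
  rewrite nthc_pref ltnSn; by apply/eqP.
have [t Ht] := fin_t HQm HQe.
apply: HnP; split => //; exists s; split; last by rewrite Hsz.
apply/Henum; exists t; apply/good_code; split; first exact: sorted_prefix.
exists i; split; first by rewrite Hsz; lia.
have -> : nth 0 s i = y i by rewrite /s nth_mkseq //; lia.
move=> sg Hs1 Hs2; exact: Ht.
Qed.
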